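(* Consider orbit codes in $\mathrm{Gr}_q(k,n)$, each given together with a defining pair $(\mathcal{U},\mathfrak{S})$ with $\mathcal{U}\in\mathrm{Gr}_q(k,n)$ and $\mathfrak{S}<GL_n(\mathbb{F}_q)$. The conjugacy relation $\sim_c$ on orbit codes is an equivalence relation. Moreover, if $\mathcal{C}_1\sim_c\mathcal{C}_2$, then $|\mathcal{C}_1|=|\mathcal{C}_2|$ and $\mathcal{C}_1,\mathcal{C}_2$ have the same distance distribution.
   Context: $\mathrm{Gr}_q(k,n)$ denotes the set of $k$-dimensional subspaces of $\mathbb{F}_q^n$, with subspace distance $d(\mathcal{U}_1,\mathcal{U}_2)=\dim\mathcal{U}_1+\dim\mathcal{U}_2-2\dim(\mathcal{U}_1\cap\mathcal{U}_2)$. $GL_n(\mathbb{F}_q)$ acts on the right on $\mathrm{Gr}_q(k,n)$ by $\mathcal{U}A:=\mathrm{rowsp}(UA)$, where $U\in\mathbb{F}_q^{k\times n}$ is any matrix with $\mathrm{rowsp}(U)=\mathcal{U}$. For $\mathcal{U}\in\mathrm{Gr}_q(k,n)$ and a subgroup $\mathfrak{S}<GL_n(\mathbb{F}_q)$, the orbit code defined by $(\mathcal{U},\mathfrak{S})$ is $\mathcal{C}=\{\mathcal{U}A\mid A\in\mathfrak{S}\}$. Two orbit codes $\mathcal{C}_1$, $\mathcal{C}_2$ defined by $(\mathcal{U}_1,\mathfrak{S}_1)$ and $(\mathcal{U}_2,\mathfrak{S}_2)$ are conjugate, $\mathcal{C}_1\sim_c\mathcal{C}_2$, if there exists $L\in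 GL_n(\mathbb{F}_q)$ with $\mathcal{U}_2=\mathcal{U}_1L$ and $\mathfrak{S}_2=L^{-1}\mathfrak{S}_1L$. The stabilizer of $\mathcal{U}$ is $\mathrm{Stab}(\mathcal{U})=\{A\in GL_n(\mathbb{F}_q)\mid\mathcal{U}A=\mathcal{U}\}$. The distance distribution of the orbit code defined by $(\mathcal{U},\mathfrak{S})$ is the tuple $(D_0,\dots,D_k)$ with $D_i=|\{A\in\mathfrak{S}\mid d(\mathcal{U},\mathcal{U}A)=2i\}|/|\mathfrak{S}\cap\mathrm{Stab}(\mathcal{U})|$. *)

(* Defs.v *)
From HB Require Import structures.
From mathcomp Require Import all_boot all_order all_algebra all_fingroup.
Set Implicit Arguments. Unset Strict Implicit. Unset Printing Implicit Defensive.
Import GRing.Theory.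
Local Open Scope ring_scope.

Section OrbitCodes.
Variables (F : finFieldType) (n : nat).

(* A subspace of F^n is represented by any matrix whose row space it is;
   as an element of a code we use the canonical representative <<U>>%MS. *)

Definition GL_subgroup (S : {set 'M[F]_n}) : Prop :=
  [/\ S != set0, {subset S <= unitmx} &
      forall A B, A \in S -> B \in S -> A *m invmx B \in S].

Definition orbit_code k (U : 'M[F]_(k, n)) (S : {set 'M[F]_n}) : {set 'M[F]_n} :=
  [set <<U *m A>>%MS | A in S].

Definition subspace_dist m p (U : 'M[F]_(m, n)) (V : 'M[F]_(p, n)) : nat :=
  (\rank U + \rank V - 2 * \rank (U :&: V)%MS)%N.

Definition Stab k (U : 'M[F]_(k, n)) : {set 'M[F]_n} :=
  [set A : 'M[F]_n | (A \in unitmx) && (U *m A == U)%MS].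

Definition dist_distr k (U : 'M[F]_(k, n)) (S : {set 'M[F]_n}) : {ffun 'I_k.+1 -> rat} :=
  [ffun i : 'I_k.+1 =>
     (#|[set A in S | subspace_dist U (U *m A) == (2 * i)%N]|%:R
      / #|S :&: Stab U|%:R)%R].

Definition conj_codes k (P1 P2 : 'M[F]_(k, n) * {set 'M[F]_n}) : Prop :=
  exists2 L : 'M[F]_n, L \in unitmx &
    (P2.1 == P1.1 *m L)%MS /\
    P2.2 = [set invmx L *m A *m L | A in P1.2].

Definition orbit_pair k (P : 'M[F]_(k, n) * {set 'M[F]_n}) : Prop :=
  \rank P.1 = k /\ GL_subgroup P.2.

End OrbitCodes.

(* Main.v *)
Require Import Defs.
From HB Require Import structures.
From mathcomp Require Import all_boot all_order all_algebra all_fingroup.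
From mathcomp Require Import zify.
Set Implicit Arguments. Unset Strict Implicit. Unset Printing Implicit Defensive.
Import GRing.Theory.
Local Open Scope ring_scope.

Section Aux.
Variables (F : finFieldType) (n : nat).

Lemma eqMunit m1 m2 (X : 'M[F]_(m1, n)) (Y : 'M[F]_(m2, n)) (L : 'M[F]_n) :
  L \in unitmx -> (X *m L == Y *m L)%MS = (X == Y)%MS.
Proof.
move=> uL; apply/eqmxP/eqmxP => [h|h]; last exact: eqmxMr.
rewrite -(mulmxK uL X) -(mulmxK uL Y); exact: eqmxMr.
Qed.

Lemma dist_eqmx m1 m2 m3 m4 (U : 'M[F]_(m1, n)) (V : 'M[F]_(m2, n))
  (U' : 'M[F]_(m3, n)) (V' : 'M[F]_(m4, n)) :
  (U :=: U')%MS -> (V :=: V')%MS -> subspace_dist U V = subspace_dist U' V'.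
Proof.
move=> hU hV; rewrite /subspace_dist (cap_eqmx hU hV).
by rewrite (eqmx_rank (introT eqmxP hU)) (eqmx_rank (introT eqmxP hV)).
Qed.

Lemma dist_mul m1 m2 (U : 'M[F]_(m1, n)) (V : 'M[F]_(m2, n)) (L : 'M[F]_n) :
  L \in unitmx -> subspace_dist (U *m L) (V *m L) = subspace_dist U V.
Proof.
move=> uL; have fL : row_free L by rewrite row_free_unit.
rewrite /subspace_dist !mxrankMfree //.
have h1 := mxrank_sum_cap (U *m L) (V *m L).
have h2 := mxrank_sum_cap U V.
rewrite -(eqmx_rank (introT eqmxP (addsmxMr U V L))) mxrankMfree // !mxrankMfree // in h1.
have -> : \rank (U *m L :&: V *m L)%MS = \rank (U :&: V)%MS by lia.
by [].
Qed.

Lemma invmxM' (L M : 'M[F]_n) : L \in unitmx -> M \in unitmx ->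
  invmx (L *m M) = invmx M *m invmx L.
Proof.
move=> uL uM.
transitivity (invmx (L *m M) *m (L *m M) *m invmx M *m invmx L).
  by rewrite -!mulmxA mulKVmx // mulmxV // mulmx1.
by rewrite mulVmx ?unitmx_mul ?uL // mul1mx.
Qed.

Definition cj (L A : 'M[F]_n) := invmx L *m A *m L.

Lemma cj_inj L : L \in unitmx -> injective (cj L).
Proof.
move=> uL A B; rewrite /cj => h.
have := congr1 (fun M => L *m (M *m invmx L)) h.
by rewrite /= !mulmxK // !mulKVmx.
Qed.

Lemma card_cj L (S : {set 'M[F]_n}) (Q : pred 'M[F]_n) :
  L \in unitmx ->
  #|[set B in [set cj L A | A in S] | Q B]| = #|[set A in S | Q (cj L A)]|.
Proof.
move=> uL.
have -> : [set B in [set cj L A | A in S] | Q B] = cj L @: [set A in S | Q (cj L A)].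
  apply/setP => B; rewrite !inE; apply/andP/imsetP.
    by case=> /imsetP [A AS ->] QB; exists A => //; rewrite inE AS.
  by case=> A; rewrite inE => /andP [AS QA] ->; split => //; apply: imset_f.
by rewrite card_imset //; apply: cj_inj.
Qed.

End Aux.

Theorem mainTheorem5 (F : finFieldType) (k n : nat) :
  let P := fun X : 'M[F]_(k, n) * {set 'M[F]_n} => orbit_pair X in
  (* conjugacy is an equivalence relation on (valid) defining pairs *)
  (forall X, P X -> conj_codes X X) /\
  (forall X Y, P X -> P Y -> conj_codes X Y -> conj_codes Y X) /\
  (forall X Y Z, P X -> P Y -> P Z ->
     conj_codes X Y -> conj_codes Y Z -> conj_codes X Z) /\
  (* conjugate codes have the same cardinality and distance distribution *)
  (forall X Y, P X -> P Y -> conj_codes X Y ->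
     #|orbit_code X.1 X.2| = #|orbit_code Y.1 Y.2| /\
     dist_distr X.1 X.2 = dist_distr Y.1 Y.2).
Proof.
move=> P; split; [|split; [|split]].
- move=> [U S] _; exists 1%:M; first exact: unitmx1.
  split; first by rewrite mulmx1 /=; apply/eqmxP; apply: eqmx_refl.
  apply/setP => A; rewrite invmx1; apply/idP/imsetP => [AS|[B BS ->]].
    by exists A => //; rewrite mul1mx mulmx1.
  by rewrite mul1mx mulmx1.
- move=> [U1 S1] [U2 S2] _ _ [L uL] /= [hU ->].
  exists (invmx L); first by rewrite unitmx_inv.
  split => /=.
    by rewrite -(eqMunit _ _ uL) mulmxKV //; apply/eqmxP/eqmx_sym/eqmxP.
  apply/setP => A; apply/idP/imsetP => [AS|[B /imsetP [C CS ->] ->]].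
    exists (invmx L *m A *m L); first by apply: imset_f.
    by rewrite invmxK !mulmxA mulmxV // mul1mx mulmxK.
  by rewrite invmxK !mulmxA mulmxV // mul1mx mulmxK.
- move=> [U1 S1] [U2 S2] [U3 S3] _ _ _ [L uL] /= [hU ->] [M uM] /= [hV ->].
  exists (L *m M); first by rewrite unitmx_mul uL.
  split => /=.
    apply/eqmxP; apply: (eqmx_trans (elimT eqmxP hV)).
    by rewrite mulmxA; apply: eqmxMr; apply/eqmxP.
  apply/setP => A; apply/imsetP/imsetP => [[B /imsetP [C CS ->] ->]|[C CS ->]].
    exists C => //; rewrite invmxM' //; by rewrite !mulmxA.
  exists (invmx L *m C *m L); first by apply: imset_f.
  by rewrite invmxM' // !mulmxA.
- move=> [U1 S1] [U2 S2] _ _ [L uL] /= [/eqmxP hU ->].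
  have e1 A : (U2 *m cj L A :=: U1 *m A *m L)%MS.
    apply: eqmx_trans (eqmxMr _ hU) _.
    by rewrite /cj !mulmxA mulmxK //; apply: eqmx_refl.
  split.
    have -> : orbit_code U2 [set invmx L *m A *m L | A in S1] =
              (fun V => <<V *m L>>%MS) @: orbit_code U1 S1.
      rewrite /orbit_code -imset_comp -imset_comp; apply: eq_imset => A /=.
      apply: eq_genmx; apply: eqmx_trans (e1 A) _.
      by apply: eqmxMr; apply: eqmx_sym; apply: genmxE.
    apply/esym/card_in_imset => V W /imsetP [A _ ->] /imsetP [B _ ->] h.
    rewrite -[<<U1 *m A>>%MS]genmx_id -[<<U1 *m B>>%MS]genmx_id.
    apply: eq_genmx; apply/eqmxP; rewrite -(eqMunit _ _ uL); apply/eqmxP.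
    apply: eqmx_trans (eqmx_sym (genmxE _)) _; rewrite h; exact: genmxE.
  have hd A : subspace_dist U2 (U2 *m cj L A) = subspace_dist U1 (U1 *m A).
    by rewrite (dist_eqmx hU (e1 A)) dist_mul.
  have hS A : (cj L A \in Stab U2) = (A \in Stab U1).
    rewrite !inE /cj !unitmx_mul unitmx_inv uL /= andbT; congr (_ && _).
    apply/eqmxP/eqmxP => h.
      apply/eqmxP; rewrite -(eqMunit _ _ uL); apply/eqmxP.
      exact: eqmx_trans (eqmx_sym (e1 A)) (eqmx_trans h hU).
    exact: eqmx_trans (e1 A) (eqmx_trans (eqmxMr L h) (eqmx_sym hU)).
  have sI (S T : {set 'M[F]_n}) : S :&: T = [set x in S | x \in T].
    by apply/setP => x; rewrite !inE.
  apply/ffunP => i; rewrite !ffunE !sI.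
  rewrite (card_cj _ (fun B => subspace_dist U2 (U2 *m B) == (2 * i)%N)) //.
  rewrite (card_cj _ (fun B => B \in Stab U2)) //.
  congr (_%:R / _%:R)%R; apply: eq_card => A; rewrite !in_set.
    by rewrite hd.
  congr (_ && _); by move: (hS A); rewrite !inE => ->.
Qed.
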